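(* Let $(X,d^\star)$ be a $\star$-metric space. If the topological space $(X,\mathscr{T}_{d^\star})$ is countably compact, then $(X,d^\star)$ is totally bounded.
   Context: A $t$-definer is a function $\star:[0,\infty)\times[0,\infty)\to[0,\infty)$ such that for all $a,b,c\ge 0$: $a\star b=b\star a$; $a\star(b\star c)=(a\star b)\star c$; if $a\le b$ then $a\star c\le b\star c$; $a\star 0=a$; and $\star$ is continuous in its first variable with respect to the Euclidean topology. Given a nonempty set $X$ and a $t$-definer $\star$, a $\star$-metric on $X$ is a function $d^\star:X\times X\to[0,\infty)$ such that for all $x,y,z\in X$: $d^\star(x,y)=0$ iff $x=y$; $d^\star(x,y)=d^\star(y,x)$; and $d^\star(x,y)\le d^\star(x,z)\star d^\star(z,y)$. Put $B_{d^\star}(a,r)=\{x\in X: d^\star(a,x)<r\}$ and let $\mathscr{T}_{d^\star}$ be the topology consisting of all $U\subseteq X$ such that for each $a\in U$ some $B_{d^\star}(a,r)$, $r>0$, is contained in $U$. A space is countably compact if every countable open cover has a finite subcover. $(X,d^\star)$ is totally bounded if for every $\epsilon>0$ there is a finite $F\subseteq X$ with $X=\bigcup_{x\in F}B_{d^\star}(x,\epsilon)$. *)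

(* Defs.v *)
From Stdlib Require Import Reals List.
Open Scope R_scope.

(* A t-definer: an operation on [0,oo), modelled as star : R -> R -> R
   whose axioms are required on nonnegative arguments, and which maps
   [0,oo) x [0,oo) into [0,oo). *)
Definition t_definer (star : R -> R -> R) : Prop :=
  (forall a b, 0 <= a -> 0 <= b -> 0 <= star a b) /\
  (forall a b, 0 <= a -> 0 <= b -> star a b = star b a) /\
  (forall a b c, 0 <= a -> 0 <= b -> 0 <= c ->
      star a (star b c) = star (star a b) c) /\
  (forall a b c, 0 <= a -> 0 <= b -> 0 <= c -> a <= b -> star a c <= star b c) /\
  (forall a, 0 <= a -> star a 0 = a) /\
  (forall b a, 0 <= b -> 0 <= a ->
     forall eps, 0 < eps -> exists delta, 0 < delta /\
       forall x, 0 <= x -> Rabs (x - a) < delta ->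
         Rabs (star x b - star a b) < eps).

Definition star_metric {X : Type} (star : R -> R -> R) (d : X -> X -> R) : Prop :=
  (forall x y, 0 <= d x y) /\
  (forall x y, d x y = 0 <-> x = y) /\
  (forall x y, d x y = d y x) /\
  (forall x y z, d x y <= star (d x z) (d z y)).

Definition ball {X : Type} (d : X -> X -> R) (a : X) (r : R) : X -> Prop :=
  fun x => d a x < r.

Definition d_open {X : Type} (d : X -> X -> R) (U : X -> Prop) : Prop :=
  forall a, U a -> exists r, 0 < r /\ forall x, ball d a r x -> U x.

(* A countable cover is indexed by nat (finite covers can be padded by
   repetition); a finite subcover is given by a finite list of indices. *)
Definition countably_compact {X : Type} (d : X -> X -> R) : Prop :=
  forall U : nat -> (X -> Prop),
    (forall n, d_open d (U n)) ->
    (forall x, exists n, U n x) ->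
    exists l : list nat, forall x, exists n, In n l /\ U n x.

Definition totally_bounded {X : Type} (d : X -> X -> R) : Prop :=
  forall eps, 0 < eps ->
    exists F : list X, forall x, exists y, In y F /\ ball d y eps x.

(* Main.v *)
Require Import Defs.
From Stdlib Require Import Reals List Lra Lia Classical ClassicalEpsilon.
Open Scope R_scope.

Section Aux.
Variable X : Type.
Variable g : list X -> X.
Fixpoint pre (n : nat) : list X :=
  match n with O => nil | S k => g (pre k) :: pre k end.
Lemma pre_in : forall n m, (m < n)%nat -> In (g (pre m)) (pre n).
Proof.
  induction n; intros m H; [lia|]. simpl.
  destruct (Nat.eq_dec m n) as [->|Hne]; [now left|right; apply IHn; lia].
Qed.
End Aux.

Theorem corollary3p3 (X : Type) (star : R -> R -> R) (d : X -> X -> R) (x0 : X) :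
  t_definer star -> star_metric star d ->
  countably_compact d -> totally_bounded d.
Proof.
  intros [Hnn [Hcom [_ [_ [H0 Hcont]]]]] [Dnn [Deq [Dsym Dtri]]] CC.
  intros eps Heps.
  apply NNPP; intro NTB.
  assert (Hg : forall F : list X, exists x, forall y, In y F -> ~ d y x < eps).
  { intro F. apply NNPP; intro C. apply NTB. exists F. intro x.
    apply NNPP; intro C2. apply C. exists x. intros y Hy Hlt. apply C2. eauto. }
  set (g := fun F => proj1_sig (constructive_indefinite_description _ (Hg F))).
  assert (gP : forall F y, In y F -> ~ d y (g F) < eps).
  { intro F. unfold g. destruct (constructive_indefinite_description _ (Hg F)). simpl. auto. }
  set (s := fun n => g (pre X g n)).
  assert (Sep : forall m k, m <> k -> eps <= d (s m) (s k)).
  { intros m k Hmk. destruct (Nat.lt_gt_cases m k) as [[Hl|Hl] _]; auto.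
    - apply Rnot_lt_le. apply gP. apply pre_in; auto.
    - rewrite Dsym. apply Rnot_lt_le. apply gP. apply pre_in; auto. }
  assert (Sne : forall m k, m <> k -> s m <> s k).
  { intros m k Hmk E. pose proof (Sep m k Hmk). rewrite E in H.
    assert (d (s k) (s k) = 0) by (apply Deq; auto). lra. }
  set (U := fun n x => forall m, m <> n -> x <> s m).
  destruct (CC U) as [l Hl].
  - intros n a Ha. apply NNPP; intro C.
    assert (Hr : forall r, 0 < r -> exists m, m <> n /\ d a (s m) < r).
    { intros r Hr. apply NNPP; intro C2. apply C. exists r. split; auto.
      intros x Hx m Hm E. subst x. apply C2. exists m. split; auto. }
    destruct (Hr (eps/2)) as [k [Hkn Hk]]; [lra|].
    assert (Hv : 0 < d a (s k)).
    { destruct (Dnn a (s k)) as [?|E]; auto. symmetry in E. apply Deq in E.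
      exfalso. exact (Ha k Hkn E). }
    destruct (Hcont (d a (s k)) 0 (Dnn _ _) (Rle_refl 0) (eps/2)) as [del [Hdel Hc]]; [lra|].
    destruct (Hr (Rmin del (d a (s k)))) as [m [Hmn Hm]].
    { apply Rmin_pos; auto. }
    assert (Hmk : m <> k).
    { intro E; subst m. pose proof (Rmin_r del (d a (s k))). lra. }
    pose proof (Hc (d a (s m)) (Dnn _ _)) as Hc'.
    rewrite Rminus_0_r, Rabs_right in Hc' by (apply Rle_ge, Dnn).
    specialize (Hc' (Rlt_le_trans _ _ _ Hm (Rmin_l _ _))).
    rewrite (Hcom 0 (d a (s k))), H0 in Hc' by (auto; lra).
    apply Rabs_def2 in Hc'. destruct Hc' as [Hc1 _].
    pose proof (Dtri (s m) (s k) a). rewrite (Dsym (s m) a) in H.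
    pose proof (Sep m k Hmk). lra.
  - intro x. destruct (classic (exists m, x = s m)) as [[m ->]|Hno].
    + exists m. intros m' Hm' E. exact (Sne m m' (not_eq_sym Hm') E).
    + exists O. intros m _ E. apply Hno. eauto.
  - set (N := S (fold_right Nat.max O l)).
    assert (HN : forall n, In n l -> (n < N)%nat).
    { unfold N. clear. induction l as [|b l IHl]; simpl; intros n Hn; [destruct Hn|].
      destruct Hn as [->|Hn]; [lia|]. specialize (IHl n Hn). lia. }
    destruct (Hl (s N)) as [n [Hin Hu]].
    apply (Hu N); auto. specialize (HN n Hin). lia.
Qed.
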